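(* Let $w:\mathbb{Z}\to\mathbb{R}$ be a weight with $w(n)\geq 1$ for all $n$ and $\sup_{n\in\mathbb{Z}}\big(|\tfrac{w(n+1)}{w(n)}|+|\tfrac{w(n)}{w(n+1)}|\big)<\infty$, and fix $1\leq p\leq\infty$. Suppose $(\alpha(n,t),\beta(n,t))$ and $(\tilde\alpha(n,t),\tilde\beta(n,t))$ are arbitrary bounded solutions, defined for $t\in(t_0-T,t_0+T)$, of the Ablowitz--Ladik system \[ -i\alpha_t-(1-\alpha\beta)(\alpha^-+\alpha^+)+2\alpha=0,\qquad -i\beta_t+(1-\alpha\beta)(\beta^-+\beta^+)-2\beta=0. \] If $\|(\alpha(t)-\tilde\alpha(t),\beta(t)-\tilde\beta(t))\|_{w,p}<\infty$ holds for $t=t_0$, then it holds for all $t\in(t_0-T,t_0+T)$.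
   Context: Here $\alpha,\beta,\tilde\alpha,\tilde\beta:\mathbb{Z}\times\mathbb{R}\to\mathbb{C}$ are bounded on $\mathbb{Z}\times(t_0-T,t_0+T)$ and $C^1$ in $t$ for each $n$, and $f^\pm(n,t)=f(n\pm1,t)$. $T>0$ is the length of the local existence interval of the solutions. For pairs of sequences $(\alpha,\beta)$, \[ \|(\alpha,\beta)\|_{w,p}=\Big(\sum_{n\in\mathbb{Z}} w(n)\big(|\alpha(n)|^p+|\beta(n)|^p\big)\Big)^{1/p}\ (1\leq p<\infty),\qquad \|(\alpha,\beta)\|_{w,\infty}=\sup_{n\in\mathbb{Z}} w(n)\big(|\alpha(n)|+|\beta(n)|\big). \] *)

(* Defs.v *)
From Stdlib Require Import Reals ZArith.
From Coquelicot Require Import Coquelicot.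
Open Scope R_scope.

Definition rpow (x q : R) : R := if Rle_dec x 0 then 0 else Rpower x q.

(* For finite p the sum over Z of a
   nonnegative family is finite iff both half-sums (n >= 0, n < 0) converge. *)
Definition wnorm_finite (w : Z -> R) (p : Rbar) (a b : Z -> C) : Prop :=
  match p with
  | Finite q =>
      let term := fun n : Z => w n * (rpow (Cmod (a n)) q + rpow (Cmod (b n)) q) in
      ex_series (fun k : nat => term (Z.of_nat k)) /\
      ex_series (fun k : nat => term (- Z.of_nat (S k))%Z)
  | p_infty => exists M : R, forall n : Z, w n * (Cmod (a n) + Cmod (b n)) <= M
  | m_infty => False
  end.

Definition in_tint (t0 T t : R) : Prop := t0 - T < t < t0 + T.

Definition bounded_on (t0 T : R) (a : Z -> R -> C) : Prop :=
  exists M : R, forall n t, in_tint t0 T t -> Cmod (a n t) <= M.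

Definition AL_solution (t0 T : R) (a b : Z -> R -> C) : Prop :=
  exists da db : Z -> R -> C,
    forall (n : Z) (t : R), in_tint t0 T t ->
      is_derive (a n) t (da n t) /\ is_derive (b n) t (db n t) /\
      continuous (da n) t /\ continuous (db n) t /\
      (- Ci * da n t - (1 - a n t * b n t) * (a (n - 1)%Z t + a (n + 1)%Z t)
         + 2 * a n t = 0)%C /\
      (- Ci * db n t + (1 - a n t * b n t) * (b (n - 1)%Z t + b (n + 1)%Z t)
         - 2 * b n t = 0)%C.

(* Main.v *)
Require Import Defs.
From Stdlib Require Import Reals ZArith Lra Lia.
From Coquelicot Require Import Coquelicot.
Open Scope R_scope.

Fixpoint Wsum (f : Z -> R) (L : nat) : R :=
  match L with
  | O => f 0%Z
  | S L' => Wsum f L' + f (Z.of_nat (S L')) + f (- Z.of_nat (S L'))%Z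
  end.

Lemma Wsum_nonneg f L : (forall n, 0 <= f n) -> 0 <= Wsum f L.
Proof. intros H; induction L; cbn [Wsum]; [apply H|]. pose proof (H (Z.of_nat (S L))); pose proof (H (- Z.of_nat (S L))%Z); lra. Qed.

Lemma Wsum_le f g L : (forall n, f n <= g n) -> Wsum f L <= Wsum g L.
Proof. intros H; induction L; cbn [Wsum]; [apply H|]. pose proof (H (Z.of_nat (S L))); pose proof (H (- Z.of_nat (S L))%Z); lra. Qed.

Lemma Wsum_le_win f g L : (forall n, (Z.abs n <= Z.of_nat L)%Z -> f n <= g n) -> Wsum f L <= Wsum g L.
Proof.
  induction L; intros H; cbn [Wsum].
  - apply H; cbn [Wsum]; lia.
  - assert (H1 := H (Z.of_nat (S L)) ltac:(lia)).
    assert (H2 := H (- Z.of_nat (S L))%Z ltac:(lia)).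
    assert (Wsum f L <= Wsum g L) by (apply IHL; intros; apply H; lia). lra.
Qed.

Lemma Wsum_mono f L L' : (forall n, 0 <= f n) -> (L <= L')%nat -> Wsum f L <= Wsum f L'.
Proof.
  intros H HL; induction HL; [lra|]. cbn [Wsum].
  pose proof (H (Z.of_nat (S m))); pose proof (H (- Z.of_nat (S m))%Z); lra.
Qed.

Lemma Wsum_plus f g L : Wsum (fun n => f n + g n) L = Wsum f L + Wsum g L.
Proof. induction L; cbn [Wsum]; [lra|]. rewrite IHL; lra. Qed.

Lemma Wsum_scal c f L : Wsum (fun n => c * f n) L = c * Wsum f L.
Proof. induction L; cbn [Wsum]; [lra|]. rewrite IHL; lra. Qed.

Lemma Wsum_shiftp_eq f L : Wsum (fun n => f (n + 1)%Z) L = Wsum f L - f (- Z.of_nat L)%Z + f (Z.of_nat (S L)).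
Proof.
  induction L; cbn [Wsum].
  - simpl. lra.
  - rewrite IHL.
    replace (Z.of_nat (S L) + 1)%Z with (Z.of_nat (S (S L))) by lia.
    replace (- Z.of_nat (S L) + 1)%Z with (- Z.of_nat L)%Z by lia. lra.
Qed.

Lemma Wsum_shiftm_eq f L : Wsum (fun n => f (n - 1)%Z) L = Wsum f L - f (Z.of_nat L) + f (- Z.of_nat (S L))%Z.
Proof.
  induction L; cbn [Wsum].
  - simpl. lra.
  - rewrite IHL.
    replace (- Z.of_nat (S L) - 1)%Z with (- Z.of_nat (S (S L)))%Z by lia.
    replace (Z.of_nat (S L) - 1)%Z with (Z.of_nat L)%Z by lia. lra.
Qed.

Lemma Wsum_shiftp f L : (forall n, 0 <= f n) -> Wsum (fun n => f (n + 1)%Z) L <= Wsum f (S L).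
Proof.
  intros H. rewrite Wsum_shiftp_eq. cbn [Wsum].
  pose proof (H (- Z.of_nat L)%Z); pose proof (H (- Z.of_nat (S L))%Z); lra.
Qed.

Lemma Wsum_shiftm f L : (forall n, 0 <= f n) -> Wsum (fun n => f (n - 1)%Z) L <= Wsum f (S L).
Proof.
  intros H. rewrite Wsum_shiftm_eq. cbn [Wsum].
  pose proof (H (Z.of_nat L)%Z); pose proof (H (Z.of_nat (S L))%Z); lra.
Qed.

Definition finZ (f : Z -> R) : Prop :=
  ex_series (fun k : nat => f (Z.of_nat k)) /\ ex_series (fun k : nat => f (- Z.of_nat (S k))%Z).

Lemma Wsum_sum_n f L : Wsum f (S L) = sum_n (fun k => f (Z.of_nat k)) (S L) + sum_n (fun k => f (- Z.of_nat (S k))%Z) L.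
Proof.
  induction L.
  - simpl. rewrite sum_Sn, !sum_O. simpl. unfold plus; simpl. lra.
  - change (Wsum f (S (S L))) with (Wsum f (S L) + f (Z.of_nat (S (S L))) + f (- Z.of_nat (S (S L)))%Z).
    rewrite IHL, (sum_Sn (fun k => f (Z.of_nat k)) (S L)), (sum_Sn (fun k => f (- Z.of_nat (S k))%Z) L). change (@plus R_AbelianMonoid ?x ?y) with (x + y). change (@plus R_AbelianMonoid ?x ?y) with (x + y). lra.
Qed.

Lemma sum_n_nonneg (g : nat -> R) n : (forall k, 0 <= g k) -> 0 <= sum_n g n.
Proof. intros H; induction n. rewrite sum_O; apply H. rewrite sum_Sn. change (@plus R_AbelianMonoid ?x ?y) with (x + y). pose proof (H (S n)); lra. Qed.

Lemma sum_n_nonneg_incr (g : nat -> R) : (forall k, 0 <= g k) -> forall n, sum_n g n <= sum_n g (S n).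
Proof. intros H n. rewrite sum_Sn. change (@plus R_AbelianMonoid ?x ?y) with (x + y). pose proof (H (S n)); lra. Qed.

Lemma series_bound (g : nat -> R) : (forall k, 0 <= g k) -> ex_series g -> exists B, forall n, sum_n g n <= B.
Proof.
  intros H [l Hl]. exists l. intros n. apply (is_lim_seq_incr_compare (sum_n g) l Hl).
  apply sum_n_nonneg_incr; auto.
Qed.

Lemma bound_series (g : nat -> R) B : (forall k, 0 <= g k) -> (forall n, sum_n g n <= B) -> ex_series g.
Proof.
  intros H HB.
  destruct (growing_cv (sum_n g)) as [l Hl].
  - intros n. apply sum_n_nonneg_incr; auto.
  - exists B. intros x [n ->]. apply HB.
  - exists l. apply (proj2 (is_lim_seq_Reals _ _)) in Hl. exact Hl.
Qed.

Lemma finZ_Wsum f : (forall n, 0 <= f n) -> finZ f -> exists B, forall L, Wsum f L <= B.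
Proof.
  intros H [H1 H2].
  destruct (series_bound _ (fun k => H _) H1) as [B1 HB1].
  destruct (series_bound _ (fun k => H _) H2) as [B2 HB2].
  exists (B1 + B2). intros L.
  apply Rle_trans with (Wsum f (S L)). apply Wsum_mono; auto.
  rewrite Wsum_sum_n. pose proof (HB1 (S L)); pose proof (HB2 L); lra.
Qed.

Lemma Wsum_finZ f B : (forall n, 0 <= f n) -> (forall L, Wsum f L <= B) -> finZ f.
Proof.
  intros H HB. split.
  - apply (bound_series _ B). intros; apply H.
    intros n. destruct n.
    + rewrite sum_O. simpl. specialize (HB O). simpl in HB. lra.
    + specialize (HB (S n)). rewrite Wsum_sum_n in HB.
      assert (0 <= sum_n (fun k => f (- Z.of_nat (S k))%Z) n).
      { apply sum_n_nonneg. intros; apply H. }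
      lra.
  - apply (bound_series _ B). intros; apply H.
    intros n. specialize (HB (S n)). rewrite Wsum_sum_n in HB.
      assert (0 <= sum_n (fun k => f (Z.of_nat k)) (S n)).
      { apply sum_n_nonneg. intros; apply H. }
      lra.
Qed.

Lemma rho_pt (w rho Zs a : Z -> R) K eta n :
  (forall n, 0 <= rho n <= w n) -> (forall n, rho (n+1)%Z <= K * rho n) ->
  (forall n, rho (n-1)%Z <= K * rho n) ->
  (forall n, 0 <= Zs n) -> (forall n, 0 <= a n) -> 0 <= eta ->
  (forall n, Zs n <= a n + eta * (Zs (n-1)%Z + Zs n + Zs (n+1)%Z)) ->
  rho n * Zs n <= w n * a n + eta * (K * (rho (n-1)%Z * Zs (n-1)%Z) + rho n * Zs n + K * (rho (n+1)%Z * Zs (n+1)%Z)).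
Proof.
  intros Hr Hu Hd HZ Ha He HZi.
  assert (h1 : rho n <= K * rho (n-1)%Z).
  { specialize (Hu (n-1)%Z). replace (n - 1 + 1)%Z with n in Hu by lia. exact Hu. }
  assert (h2 : rho n <= K * rho (n+1)%Z).
  { specialize (Hd (n+1)%Z). replace (n + 1 - 1)%Z with n in Hd by lia. exact Hd. }
  specialize (HZi n). destruct (Hr n) as [r0 r1].
  pose proof (HZ n); pose proof (HZ (n-1)%Z); pose proof (HZ (n+1)%Z); pose proof (Ha n).
  apply Rle_trans with (rho n * (a n + eta * (Zs (n-1)%Z + Zs n + Zs (n+1)%Z))).
  { apply Rmult_le_compat_l; auto. }
  assert (rho n * a n <= w n * a n) by nra.
  assert (rho n * Zs (n-1)%Z <= K * (rho (n-1)%Z * Zs (n-1)%Z)) by nra.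
  assert (rho n * Zs (n+1)%Z <= K * (rho (n+1)%Z * Zs (n+1)%Z)) by nra.
  nra.
Qed.

Lemma Rmin_ratio x y x' y' K : 0 <= K -> x <= K * x' -> y <= K * y' -> Rmin x y <= K * Rmin x' y'.
Proof. intros. unfold Rmin. destruct (Rle_dec x y); destruct (Rle_dec x' y'); nra. Qed.

Lemma Rmin_nonneg x y : 0 <= x -> 0 <= y -> 0 <= Rmin x y.
Proof. intros; unfold Rmin; destruct (Rle_dec x y); lra. Qed.

Lemma wsup_core (w Zs a : Z -> R) K M eta B :
  (forall n, 1 <= w n) -> 2 <= K -> (forall n, w (n+1)%Z <= K * w n) -> (forall n, w (n-1)%Z <= K * w n) ->
  (forall n, 0 <= Zs n <= M) -> (forall n, 0 <= a n) -> 0 <= eta -> eta * (1 + 2*K) <= /2 ->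
  (forall n, Zs n <= a n + eta * (Zs (n-1)%Z + Zs n + Zs (n+1)%Z)) ->
  (forall n, w n * a n <= B) ->
  forall n, w n * Zs n <= 2 * B.
Proof.
  intros Hw HK Hu Hd HZ Ha He Heta HZi HB n0.
  set (N := w n0).
  set (rho := fun n => Rmin (w n) N).
  assert (Hr : forall n, 0 <= rho n <= w n).
  { intros n; unfold rho; split. apply Rmin_nonneg; pose proof (Hw n); pose proof (Hw n0); unfold N; lra. apply Rmin_l. }
  assert (Hru : forall n, rho (n+1)%Z <= K * rho n).
  { intros n; unfold rho; apply Rmin_ratio; [lra|apply Hu|]. pose proof (Hw n0); unfold N; nra. }
  assert (Hrd : forall n, rho (n-1)%Z <= K * rho n).
  { intros n; unfold rho; apply Rmin_ratio; [lra|apply Hd|]. pose proof (Hw n0); unfold N; nra. }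
  set (g := fun n => rho n * Zs n).
  assert (Hg0 : forall n, 0 <= g n). { intros n; unfold g; pose proof (Hr n); pose proof (HZ n); nra. }
  assert (HgM : forall n, g n <= N * M).
  { intros n; unfold g, rho. pose proof (Rmin_r (w n) N). pose proof (Hr n). pose proof (HZ n). unfold rho in *. nra. }
  destruct (completeness (fun x => exists n, x = g n)) as [l [Hl1 Hl2]].
  { exists (N * M). intros x [n ->]. apply HgM. }
  { exists (g n0). eauto. }
  assert (Hgl : forall n, g n <= l) by (intros n; apply Hl1; eauto).
  assert (l0 : 0 <= l) by (apply Rle_trans with (g n0); auto).
  assert (Hgb : forall n, g n <= B + l / 2).
  { intros n. pose proof (rho_pt w rho Zs a K eta n Hr Hru Hrd (fun n => proj1 (HZ n)) Ha He HZi) as P.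
    fold (g n) (g (n-1)%Z) (g (n+1)%Z) in P.
    pose proof (HB n). pose proof (Hgl n). pose proof (Hgl (n-1)%Z). pose proof (Hgl (n+1)%Z).
    assert (eta * (K * g (n - 1)%Z + g n + K * g (n + 1)%Z) <= eta * ((1 + 2*K) * l)).
    { apply Rmult_le_compat_l; auto. nra. }
    nra. }
  assert (l <= B + l / 2). { apply Hl2. intros x [n ->]. apply Hgb. }
  assert (g n0 = w n0 * Zs n0).
  { unfold g, rho, N. rewrite Rmin_left; lra. }
  pose proof (Hgl n0). unfold N in *. lra.
Qed.

Lemma half_pow_anti k m : (k <= m)%nat -> (/2)^m <= (/2)^k.
Proof.
  intros H; induction H; [lra|]. simpl. assert (0 <= (/2)^m) by (apply pow_le; lra). lra.
Qed.

Lemma half_pow_shift (n n' : Z) : (Z.abs n' <= Z.abs n + 1)%Z -> (/2)^(Z.abs_nat n) <= 2 * (/2)^(Z.abs_nat n').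
Proof.
  intros H. assert (Z.abs_nat n' <= S (Z.abs_nat n))%nat by lia.
  pose proof (half_pow_anti _ _ H0). simpl in H1. lra.
Qed.

Lemma Wsum_term f L n : (forall n, 0 <= f n) -> (Z.abs n <= Z.of_nat L)%Z -> f n <= Wsum f L.
Proof.
  intros H. induction L; intros Hn; cbn [Wsum].
  - replace n with 0%Z by lia. lra.
  - pose proof (H (Z.of_nat (S L))). pose proof (H (- Z.of_nat (S L))%Z).
    pose proof (Wsum_nonneg f L H).
    destruct (Z_le_gt_dec (Z.abs n) (Z.of_nat L)).
    + specialize (IHL l). lra.
    + destruct (Z_le_gt_dec 0 n).
      * replace n with (Z.of_nat (S L)) by lia. lra.
      * replace n with (- Z.of_nat (S L))%Z by lia. lra.
Qed.

Lemma wsum_core (w Zs a : Z -> R) K M eta B :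
  (forall n, 1 <= w n) -> 2 <= K -> (forall n, w (n+1)%Z <= K * w n) -> (forall n, w (n-1)%Z <= K * w n) ->
  (forall n, 0 <= Zs n <= M) -> (forall n, 0 <= a n) -> 0 <= eta -> eta * (1 + 2*K) <= /2 ->
  (forall n, Zs n <= a n + eta * (Zs (n-1)%Z + Zs n + Zs (n+1)%Z)) ->
  (forall L, Wsum (fun n => w n * a n) L <= B) ->
  forall L, Wsum (fun n => w n * Zs n) L <= 2 * B + 2.
Proof.
  intros Hw HK Hu Hd HZ Ha He Heta HZi HB L0.
  set (N := Wsum (fun n => w n * 2 ^ (Z.abs_nat n)) L0).
  assert (Hf0 : forall n, 0 <= w n * 2 ^ (Z.abs_nat n)).
  { intros n; pose proof (Hw n); assert (0 < 2 ^ (Z.abs_nat n)) by (apply pow_lt; lra); nra. }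
  assert (N0 : 0 <= N) by (apply Wsum_nonneg; auto).
  set (h := fun n : Z => (/2) ^ (Z.abs_nat n)).
  assert (h0 : forall n, 0 < h n) by (intros; unfold h; apply pow_lt; lra).
  set (rho := fun n => Rmin (w n) (N * h n)).
  assert (Hr : forall n, 0 <= rho n <= w n).
  { intros n; unfold rho; split. apply Rmin_nonneg; pose proof (Hw n); pose proof (h0 n); nra. apply Rmin_l. }
  assert (Hru : forall n, rho (n+1)%Z <= K * rho n).
  { intros n; unfold rho; apply Rmin_ratio; [lra|apply Hu|].
    assert (h (n+1)%Z <= 2 * h n) by (unfold h; apply half_pow_shift; lia).
    pose proof (h0 n). assert (0 <= N * h n) by nra.
    apply Rle_trans with (2 * (N * h n)); [nra|]. apply Rmult_le_compat_r; lra. }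
  assert (Hrd : forall n, rho (n-1)%Z <= K * rho n).
  { intros n; unfold rho; apply Rmin_ratio; [lra|apply Hd|].
    assert (h (n-1)%Z <= 2 * h n) by (unfold h; apply half_pow_shift; lia).
    pose proof (h0 n). assert (0 <= N * h n) by nra.
    apply Rle_trans with (2 * (N * h n)); [nra|]. apply Rmult_le_compat_r; lra. }
  assert (Hwin : forall n, (Z.abs n <= Z.of_nat L0)%Z -> rho n = w n).
  { intros n Hn. unfold rho. apply Rmin_left.
    pose proof (Wsum_term _ L0 n Hf0 Hn). fold N in H.
    assert (2 ^ Z.abs_nat n * h n = 1).
    { unfold h. rewrite <- Rpow_mult_distr. replace (2 * /2) with 1 by lra. apply pow1. }
    pose proof (h0 n). pose proof (Hw n). nra. }
  set (g := fun n => rho n * Zs n).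
  assert (Hg0 : forall n, 0 <= g n). { intros n; unfold g; pose proof (Hr n); pose proof (HZ n); nra. }
  assert (HgM : forall n, g n <= N * M * h n).
  { intros n; unfold g, rho. pose proof (Rmin_r (w n) (N * h n)). pose proof (Hr n). pose proof (HZ n). unfold rho in *. nra. }
  assert (M0 : 0 <= M) by (destruct (HZ 0%Z); lra).
  assert (HS : forall L, Wsum g L <= 2 * B + 2 * N * M * (/2) ^ (S L)).
  { intros L.
    assert (P : Wsum g L <= Wsum (fun n => w n * a n) L + eta * (K * Wsum (fun n => g (n-1)%Z) L + Wsum g L + K * Wsum (fun n => g (n+1)%Z) L)).
    { rewrite <- !Wsum_scal, <- !Wsum_plus, <- Wsum_scal, <- Wsum_plus. apply Wsum_le. intros n.
      apply (rho_pt w rho Zs a K eta n Hr Hru Hrd (fun n => proj1 (HZ n)) Ha He HZi). }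
    pose proof (Wsum_shiftm g L Hg0). pose proof (Wsum_shiftp g L Hg0).
    pose proof (Wsum_mono g L (S L) Hg0 (le_S _ _ (le_n _))).
    assert (Wsum g (S L) <= Wsum g L + 2 * N * M * (/2) ^ (S L)).
    { cbn [Wsum]. pose proof (HgM (Z.of_nat (S L))). pose proof (HgM (- Z.of_nat (S L))%Z).
      unfold h in *. replace (Z.abs_nat (- Z.of_nat (S L))) with (S L) in H3 by lia. rewrite Zabs2Nat.id in H2. lra. }
    pose proof (HB L).
    assert (eta * (K * Wsum (fun n => g (n-1)%Z) L + Wsum g L + K * Wsum (fun n => g (n+1)%Z) L) <= eta * ((1 + 2*K) * Wsum g (S L))).
    { apply Rmult_le_compat_l; auto. nra. }
    assert (0 <= Wsum g (S L)) by (apply Wsum_nonneg; auto).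
    nra. }
  destruct (pow_lt_1_zero (/2) ltac:(rewrite Rabs_pos_eq; lra) (/ (N * M + 1)) ltac:(apply Rinv_0_lt_compat; nra)) as [L1 HL1].
  set (L := Nat.max L0 L1).
  specialize (HL1 (S L) ltac:(unfold L; lia)). rewrite Rabs_pos_eq in HL1 by (apply pow_le; lra).
  assert (N * M * (/2) ^ (S L) <= 1).
  { assert ((N * M + 1) * (/2) ^ (S L) < 1).
    { apply Rmult_lt_reg_l with (/ (N * M + 1)). apply Rinv_0_lt_compat; nra.
      rewrite <- Rmult_assoc, Rinv_l by nra. lra. }
    assert (0 <= (/2) ^ (S L)) by (apply pow_le; lra). nra. }
  apply Rle_trans with (Wsum g L0).
  { apply Wsum_le_win. intros n Hn. unfold g. rewrite Hwin by auto. lra. }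
  apply Rle_trans with (Wsum g L).
  { apply Wsum_mono; auto. unfold L; lia. }
  specialize (HS L). lra.
Qed.

Lemma der_fst (f : R -> C) x l : is_derive f x l -> is_derive (fun t => fst (f t)) x (fst l).
Proof.
  intros H. unfold is_derive in *.
  eapply (filterdiff_comp' f (fun z : C => fst z)) in H.
  2: { apply filterdiff_linear. apply is_linear_fst. }
  simpl in H. exact H.
Qed.
Lemma der_snd (f : R -> C) x l : is_derive f x l -> is_derive (fun t => snd (f t)) x (snd l).
Proof.
  intros H. unfold is_derive in *.
  eapply (filterdiff_comp' f (fun z : C => snd z)) in H.
  2: { apply filterdiff_linear. apply is_linear_snd. }
  simpl in H. exact H.
Qed.

Lemma mvt_R (h dh : R -> R) c s D0 :
  (forall x, Rmin c s <= x <= Rmax c s -> is_derive h x (dh x)) ->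
  (forall x, Rmin c s <= x <= Rmax c s -> Rabs (dh x) <= D0) ->
  Rabs (h s - h c) <= Rabs (s - c) * D0.
Proof.
  intros Hd Hb.
  destruct (MVT_gen h c s dh) as [x [Hx E]].
  - intros x Hx. apply Hd. lra.
  - intros x Hx. apply continuity_pt_filterlim. apply (ex_derive_continuous h x).
    exists (dh x). apply Hd; lra.
  - rewrite E, Rabs_mult, Rmult_comm. apply Rmult_le_compat_l. apply Rabs_pos. apply Hb; auto.
Qed.

Lemma mvt_C (f g df dg : R -> C) c s D0 :
  (forall x, Rmin c s <= x <= Rmax c s -> is_derive f x (df x) /\ is_derive g x (dg x)) ->
  (forall x, Rmin c s <= x <= Rmax c s -> Cmod (df x - dg x)%C <= D0) ->
  Cmod ((f s - g s) - (f c - g c))%C <= 2 * Rabs (s - c) * D0.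
Proof.
  intros Hd Hb.
  assert (D0p : 0 <= D0).
  { apply Rle_trans with (Cmod (df c - dg c)%C). apply Cmod_ge_0. apply Hb.
    unfold Rmin, Rmax; destruct (Rle_dec c s); lra. }
  assert (H1 : Rabs (fst ((f s - g s) - (f c - g c))%C) <= Rabs (s - c) * D0).
  { replace (fst ((f s - g s) - (f c - g c))%C) with ((fun t => fst (f t) - fst (g t)) s - (fun t => fst (f t) - fst (g t)) c) by (simpl; ring).
    apply (mvt_R (fun t => fst (f t) - fst (g t)) (fun t => fst (df t) - fst (dg t))).
    - intros x Hx. destruct (Hd x Hx) as [h1 h2].
      apply (is_derive_minus _ _ _ _ _ (der_fst _ _ _ h1) (der_fst _ _ _ h2)).
    - intros x Hx. apply Rle_trans with (Cmod (df x - dg x)%C); [|apply Hb; auto].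
      apply Rle_trans with (Rmax (Rabs (fst (df x - dg x)%C)) (Rabs (snd (df x - dg x)%C))); [|apply Rmax_Cmod].
      replace (fst (df x - dg x)%C) with (fst (df x) - fst (dg x)) by (simpl; ring). apply Rmax_l. }
  assert (H2 : Rabs (snd ((f s - g s) - (f c - g c))%C) <= Rabs (s - c) * D0).
  { replace (snd ((f s - g s) - (f c - g c))%C) with ((fun t => snd (f t) - snd (g t)) s - (fun t => snd (f t) - snd (g t)) c) by (simpl; ring).
    apply (mvt_R (fun t => snd (f t) - snd (g t)) (fun t => snd (df t) - snd (dg t))).
    - intros x Hx. destruct (Hd x Hx) as [h1 h2].
      apply (is_derive_minus _ _ _ _ _ (der_snd _ _ _ h1) (der_snd _ _ _ h2)).
    - intros x Hx. apply Rle_trans with (Cmod (df x - dg x)%C); [|apply Hb; auto].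
      apply Rle_trans with (Rmax (Rabs (fst (df x - dg x)%C)) (Rabs (snd (df x - dg x)%C))); [|apply Rmax_Cmod].
      replace (snd (df x - dg x)%C) with (snd (df x) - snd (dg x)) by (simpl; ring). apply Rmax_r. }
  eapply Rle_trans. apply Cmod_2Rmax.
  assert (sqrt 2 <= 2).
  { rewrite <- (sqrt_square 2) at 2 by lra. apply sqrt_le_1; lra. }
  assert (0 <= Rabs (s - c) * D0) by (apply Rmult_le_pos; [apply Rabs_pos|lra]).
  assert (Rmax (Rabs (fst ((f s - g s) - (f c - g c))%C)) (Rabs (snd ((f s - g s) - (f c - g c))%C)) <= Rabs (s - c) * D0)
    by (apply Rmax_lub; auto).
  assert (0 <= sqrt 2) by apply sqrt_pos.
  nra.
Qed.

Lemma cbound M (x y xm xp x' y' xm' xp' : C) :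
  0 <= M -> Cmod x <= M -> Cmod y <= M -> Cmod x' <= M -> Cmod y' <= M -> Cmod xm' <= M -> Cmod xp' <= M ->
  Cmod (((RtoC 1 - x*y)*(xm+xp) - RtoC 2 * x) - ((RtoC 1 - x'*y')*(xm'+xp') - RtoC 2 * x'))%C
   <= (3 + 3*M*M) * (Cmod (xm - xm')%C + Cmod (x - x')%C + Cmod (y - y')%C + Cmod (xp - xp')%C).
Proof.
  intros HM hx hy hx' hy' hm hp.
  replace (((RtoC 1 - x*y)*(xm+xp) - RtoC 2 * x) - ((RtoC 1 - x'*y')*(xm'+xp') - RtoC 2 * x'))%C with
    ((RtoC 1 - x*y)*(xm - xm') + (RtoC 1 - x*y)*(xp - xp') + (- ((x - x') * y + x' * (y - y'))) * (xm' + xp') - RtoC 2 * (x - x'))%C by ring.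
  set (A := Cmod (xm - xm')%C). set (B := Cmod (x - x')%C). set (Cc := Cmod (y - y')%C). set (Dd := Cmod (xp - xp')%C).
  assert (A0 : 0 <= A) by apply Cmod_ge_0. assert (B0 : 0 <= B) by apply Cmod_ge_0.
  assert (C0 : 0 <= Cc) by apply Cmod_ge_0. assert (D0 : 0 <= Dd) by apply Cmod_ge_0.
  assert (h1 : Cmod (RtoC 1 - x*y)%C <= 1 + M*M).
  { eapply Rle_trans. unfold Cminus. apply Cmod_triangle. rewrite Cmod_opp, Cmod_1, Cmod_mult.
    pose proof (Cmod_ge_0 x); pose proof (Cmod_ge_0 y). nra. }
  assert (h2 : Cmod (- ((x - x') * y + x' * (y - y')))%C <= M * B + M * Cc).
  { rewrite Cmod_opp. eapply Rle_trans. apply Cmod_triangle. rewrite !Cmod_mult.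
    fold B Cc. pose proof (Cmod_ge_0 x'); pose proof (Cmod_ge_0 y). nra. }
  assert (h3 : Cmod (xm' + xp')%C <= 2 * M).
  { eapply Rle_trans. apply Cmod_triangle. lra. }
  assert (h4 : Cmod (RtoC 2 * (x - x'))%C = 2 * B).
  { rewrite Cmod_mult, Cmod_R, Rabs_pos_eq by lra. reflexivity. }
  unfold Cminus at 1.
  eapply Rle_trans. apply Cmod_triangle. rewrite Cmod_opp, h4.
  eapply Rle_trans. apply Rplus_le_compat_r. apply Cmod_triangle.
  eapply Rle_trans. apply Rplus_le_compat_r. apply Rplus_le_compat_r. apply Cmod_triangle.
  rewrite !Cmod_mult. fold A Dd.
  pose proof (Cmod_ge_0 (RtoC 1 - x*y)%C). pose proof (Cmod_ge_0 (- ((x - x') * y + x' * (y - y')))%C).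
  pose proof (Cmod_ge_0 (xm' + xp')%C).
  assert (Cmod (RtoC 1 - x * y)%C * A <= (1 + M*M) * A) by nra.
  assert (Cmod (RtoC 1 - x * y)%C * Dd <= (1 + M*M) * Dd) by nra.
  assert (Cmod (- ((x - x') * y + x' * (y - y')))%C * Cmod (xm' + xp')%C <= (M * B + M * Cc) * (2 * M)).
  { apply Rmult_le_compat; auto. }
  nra.
Qed.

Definition Xd (a b a' b' : Z -> R -> C) n t := Cmod (a n t - a' n t)%C + Cmod (b n t - b' n t)%C.

Lemma deriv_eq_a (da p x : C) : (- Ci * da - p + RtoC 2 * x = RtoC 0)%C -> (- Ci * da = p - RtoC 2 * x)%C.
Proof.
  intros e. transitivity ((- Ci * da - p + RtoC 2 * x) + (p - RtoC 2 * x))%C; [ring|]. rewrite e. ring.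
Qed.

Lemma deriv_eq_b (db p x : C) : (- Ci * db + p - RtoC 2 * x = RtoC 0)%C -> (- Ci * db = - (p - RtoC 2 * x))%C.
Proof.
  intros e. transitivity ((- Ci * db + p - RtoC 2 * x) - (p - RtoC 2 * x))%C; [ring|]. rewrite e. ring.
Qed.

Lemma Cmod_mCi (z : C) : Cmod (- Ci * z)%C = Cmod z.
Proof. rewrite Cmod_mult, Cmod_opp, Cmod_Ci. ring. Qed.

Lemma in_tint_between t0 T c s x : in_tint t0 T c -> in_tint t0 T s -> Rmin c s <= x <= Rmax c s ->
  in_tint t0 T x /\ Rabs (x - c) <= Rabs (s - c).
Proof.
  unfold in_tint, Rmin, Rmax; intros. destruct (Rle_dec c s); split; try lra;
  unfold Rabs; repeat destruct Rcase_abs; lra.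
Qed.

Lemma K1 (t0 T : R) (a b a' b' : Z -> R -> C) M tau c :
  0 <= M ->
  (forall n t, in_tint t0 T t -> Cmod (a n t) <= M /\ Cmod (b n t) <= M /\ Cmod (a' n t) <= M /\ Cmod (b' n t) <= M) ->
  AL_solution t0 T a b -> AL_solution t0 T a' b' -> 0 < tau -> in_tint t0 T c ->
  exists Y : Z -> R, (forall n, 0 <= Y n <= 4 * M) /\
    (forall n s, in_tint t0 T s -> Rabs (s - c) <= tau -> Xd a b a' b' n s <= Y n) /\
    (forall n, Y n <= Xd a b a' b' n c + 4 * tau * (3 + 3*M*M) * (Y (n-1)%Z + Y n + Y (n+1)%Z)).
Proof.
  intros HM Hbd [da [db Hs]] [da' [db' Hs']] Htau Hc.
  set (E := fun n y => exists s, in_tint t0 T s /\ Rabs (s - c) <= tau /\ y = Xd a b a' b' n s).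
  assert (HX : forall n s, in_tint t0 T s -> 0 <= Xd a b a' b' n s <= 4 * M).
  { intros n s Hs0. unfold Xd. destruct (Hbd n s Hs0) as (h1 & h2 & h3 & h4).
    pose proof (Cmod_ge_0 (a n s - a' n s)%C). pose proof (Cmod_ge_0 (b n s - b' n s)%C).
    split. lra.
    assert (Cmod (a n s - a' n s)%C <= 2 * M).
    { unfold Cminus. eapply Rle_trans. apply Cmod_triangle. rewrite Cmod_opp. lra. }
    assert (Cmod (b n s - b' n s)%C <= 2 * M).
    { unfold Cminus. eapply Rle_trans. apply Cmod_triangle. rewrite Cmod_opp. lra. }
    lra. }
  assert (bnd : forall n, bound (E n)).
  { intros n. exists (4 * M). intros y [s (h1 & h2 & ->)]. apply HX; auto. }
  assert (ne : forall n, exists y, E n y).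
  { intros n. exists (Xd a b a' b' n c). exists c. split; [auto|split; [|reflexivity]]. replace (c - c) with 0 by ring; rewrite Rabs_R0; lra. }
  set (Y := fun n => proj1_sig (completeness (E n) (bnd n) (ne n))).
  assert (HY : forall n, is_lub (E n) (Y n)).
  { intros n. unfold Y. destruct (completeness (E n) (bnd n) (ne n)). simpl. auto. }
  assert (HYup : forall n s, in_tint t0 T s -> Rabs (s - c) <= tau -> Xd a b a' b' n s <= Y n).
  { intros n s h1 h2. apply (proj1 (HY n)). exists s; auto. }
  assert (HYc : forall n, Xd a b a' b' n c <= Y n).
  { intros n. apply HYup; auto. replace (c - c) with 0 by ring; rewrite Rabs_R0; lra. }
  exists Y. split; [|split; auto].
  - intros n. split. apply Rle_trans with (Xd a b a' b' n c); auto. apply HX; auto.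
    apply (proj2 (HY n)). intros y [s (h1 & h2 & ->)]. apply HX; auto.
  - intros n. apply (proj2 (HY n)). intros y [s (h1 & h2 & ->)].
    set (D := 3 + 3*M*M).
    set (Ys := Y (n-1)%Z + Y n + Y (n+1)%Z).
    assert (Hbet : forall x, Rmin c s <= x <= Rmax c s -> in_tint t0 T x /\ Rabs (x - c) <= tau).
    { intros x Hx. destruct (in_tint_between t0 T c s x Hc h1 Hx). split; auto; lra. }
    assert (Hder : forall x, Rmin c s <= x <= Rmax c s ->
      Cmod (da n x - da' n x)%C <= D * Ys /\ Cmod (db n x - db' n x)%C <= D * Ys).
    { intros x Hx. destruct (Hbet x Hx) as [hx hxc].
      destruct (Hs n x hx) as (_ & _ & _ & _ & ea & eb).
      destruct (Hs' n x hx) as (_ & _ & _ & _ & ea' & eb').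
      destruct (Hbd n x hx) as (m1 & m2 & m3 & m4).
      destruct (Hbd (n-1)%Z x hx) as (m5 & m6 & m7 & m8).
      destruct (Hbd (n+1)%Z x hx) as (m9 & m10 & m11 & m12).
      pose proof (HYup (n-1)%Z x hx hxc). pose proof (HYup n x hx hxc). pose proof (HYup (n+1)%Z x hx hxc).
      unfold Xd in *.
      pose proof (Cmod_ge_0 (a (n-1)%Z x - a' (n-1)%Z x)%C). pose proof (Cmod_ge_0 (b (n-1)%Z x - b' (n-1)%Z x)%C).
      pose proof (Cmod_ge_0 (a (n+1)%Z x - a' (n+1)%Z x)%C). pose proof (Cmod_ge_0 (b (n+1)%Z x - b' (n+1)%Z x)%C).
      pose proof (Cmod_ge_0 (a n x - a' n x)%C). pose proof (Cmod_ge_0 (b n x - b' n x)%C).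
      assert (D0 : 0 <= D) by (unfold D; nra).
      split.
      - rewrite <- Cmod_mCi.
        replace (- Ci * (da n x - da' n x))%C with (- Ci * da n x - - Ci * da' n x)%C by ring.
        rewrite (deriv_eq_a _ _ _ ea), (deriv_eq_a _ _ _ ea').
        eapply Rle_trans. apply (cbound M); auto.
        apply Rmult_le_compat_l; auto. unfold Ys. lra.
      - rewrite <- Cmod_mCi.
        replace (- Ci * (db n x - db' n x))%C with (- Ci * db n x - - Ci * db' n x)%C by ring.
        rewrite (deriv_eq_b _ _ _ eb), (deriv_eq_b _ _ _ eb').
        replace (- ((RtoC 1 - a n x * b n x) * (b (n - 1)%Z x + b (n + 1)%Z x) - RtoC 2 * b n x) -
                 - ((RtoC 1 - a' n x * b' n x) * (b' (n - 1)%Z x + b' (n + 1)%Z x) - RtoC 2 * b' n x))%C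
          with (- (((RtoC 1 - b n x * a n x) * (b (n - 1)%Z x + b (n + 1)%Z x) - RtoC 2 * b n x) -
                 ((RtoC 1 - b' n x * a' n x) * (b' (n - 1)%Z x + b' (n + 1)%Z x) - RtoC 2 * b' n x)))%C by ring.
        rewrite Cmod_opp.
        eapply Rle_trans. apply (cbound M); auto.
        apply Rmult_le_compat_l; auto. unfold Ys. lra. }
    assert (Ha : Cmod ((a n s - a' n s) - (a n c - a' n c))%C <= 2 * Rabs (s - c) * (D * Ys)).
    { apply (mvt_C (a n) (a' n) (da n) (da' n)).
      - intros x Hx. destruct (Hbet x Hx) as [hx _].
        destruct (Hs n x hx) as (d1 & _); destruct (Hs' n x hx) as (d2 & _). auto.
      - intros x Hx. apply Hder; auto. }
    assert (Hb : Cmod ((b n s - b' n s) - (b n c - b' n c))%C <= 2 * Rabs (s - c) * (D * Ys)).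
    { apply (mvt_C (b n) (b' n) (db n) (db' n)).
      - intros x Hx. destruct (Hbet x Hx) as [hx _].
        destruct (Hs n x hx) as (_ & d1 & _); destruct (Hs' n x hx) as (_ & d2 & _). auto.
      - intros x Hx. apply Hder; auto. }
    assert (0 <= D * Ys).
    { unfold D, Ys. pose proof (HYc (n-1)%Z); pose proof (HYc n); pose proof (HYc (n+1)%Z).
      pose proof (HX (n-1)%Z c Hc); pose proof (HX n c Hc); pose proof (HX (n+1)%Z c Hc).
      apply Rmult_le_pos; nra. }
    assert (2 * Rabs (s - c) * (D * Ys) <= 2 * tau * (D * Ys)) by nra.
    unfold Xd.
    assert (t1 : Cmod (a n s - a' n s)%C <= Cmod (a n c - a' n c)%C + Cmod ((a n s - a' n s) - (a n c - a' n c))%C).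
    { replace (a n s - a' n s)%C with ((a n c - a' n c) + ((a n s - a' n s) - (a n c - a' n c)))%C at 1 by ring.
      apply Cmod_triangle. }
    assert (t2 : Cmod (b n s - b' n s)%C <= Cmod (b n c - b' n c)%C + Cmod ((b n s - b' n s) - (b n c - b' n c))%C).
    { replace (b n s - b' n s)%C with ((b n c - b' n c) + ((b n s - b' n s) - (b n c - b' n c)))%C at 1 by ring.
      apply Cmod_triangle. }
    fold D Ys. lra.
Qed.

Lemma Rpower_pos x y : 0 < Rpower x y.
Proof. unfold Rpower; apply exp_pos. Qed.

Lemma rpow_nonneg x q : 0 <= rpow x q.
Proof. unfold rpow; destruct (Rle_dec x 0); [lra|]. apply Rlt_le, Rpower_pos. Qed.

Lemma rpow_mono x y q : 0 <= q -> 0 <= x <= y -> rpow x q <= rpow y q.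
Proof.
  intros Hq Hx. unfold rpow. destruct (Rle_dec x 0); destruct (Rle_dec y 0).
  lra. apply Rlt_le, Rpower_pos. lra. apply Rle_Rpower_l; lra.
Qed.

Lemma rpow_hom e x q : 0 < e -> 0 <= x -> rpow (e * x) q = Rpower e q * rpow x q.
Proof.
  intros He Hx. unfold rpow. destruct (Rle_dec x 0).
  - assert (x = 0) by lra. subst. destruct (Rle_dec (e*0) 0); [ring|lra].
  - destruct (Rle_dec (e*x) 0). nra. rewrite Rpower_mult_distr; lra.
Qed.

Lemma rpow_max x y q : rpow (Rmax x y) q <= rpow x q + rpow y q.
Proof.
  pose proof (rpow_nonneg x q); pose proof (rpow_nonneg y q).
  unfold Rmax; destruct (Rle_dec x y); lra.
Qed.

Lemma rpow_add x y q : 0 <= q -> 0 <= x -> 0 <= y -> rpow (x + y) q <= Rpower 2 q * (rpow x q + rpow y q).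
Proof.
  intros Hq Hx Hy.
  apply Rle_trans with (rpow (2 * Rmax x y) q).
  { apply rpow_mono; auto. split. lra. unfold Rmax; destruct (Rle_dec x y); lra. }
  rewrite rpow_hom by (try lra; unfold Rmax; destruct (Rle_dec x y); lra).
  apply Rmult_le_compat_l. apply Rlt_le, Rpower_pos. apply rpow_max.
Qed.

Lemma Rpower_small e q : 1 <= q -> 0 < e <= 1 -> Rpower e q <= e.
Proof.
  intros Hq He. replace q with (1 + (q - 1)) by ring. rewrite Rpower_plus, Rpower_1 by lra.
  assert (Rpower e (q - 1) <= Rpower 1 (q - 1)) by (apply Rle_Rpower_l; lra).
  assert (Rpower 1 (q - 1) = 1) by (unfold Rpower; rewrite ln_1, Rmult_0_r, exp_0; reflexivity).
  pose proof (Rpower_pos e (q-1)). nra.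
Qed.

Lemma Rpower2_ge1 q : 0 <= q -> 1 <= Rpower 2 q.
Proof.
  intros Hq. assert (Rpower 2 0 <= Rpower 2 q) by (apply Rle_Rpower; lra).
  rewrite Rpower_O in H by lra. exact H.
Qed.

Lemma cover (F : R -> Prop) t0 T tau : 0 < tau -> F t0 ->
  (forall c s, in_tint t0 T c -> in_tint t0 T s -> Rabs (s - c) <= tau -> F c -> F s) ->
  forall t, in_tint t0 T t -> F t.
Proof.
  intros Htau H0 Hstep.
  assert (Hk : forall k : nat, forall t, in_tint t0 T t -> Rabs (t - t0) <= INR k * tau -> F t).
  { induction k; intros t Ht Hd.
    - simpl in Hd. assert (t = t0).
      { pose proof (Rabs_pos (t - t0)). assert (Rabs (t - t0) = 0) by lra.
        apply Rabs_eq_0 in H1. lra. }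
      subst; auto.
    - set (lam := INR k / INR (S k)).
      assert (HS : 0 < INR (S k)) by (apply lt_0_INR; lia).
      assert (Hk0 : 0 <= INR k) by apply pos_INR.
      assert (HSk : INR (S k) = INR k + 1) by (rewrite S_INR; ring).
      assert (l1 : lam * INR (S k) = INR k) by (unfold lam; field; lra).
      assert (l0 : 0 <= lam) by (unfold lam; apply Rmult_le_pos; [lra|apply Rlt_le, Rinv_0_lt_compat; lra]).
      assert (l2 : (1 - lam) * INR (S k) = 1) by nra.
      assert (l3 : lam <= 1) by nra.
      set (c := t0 + lam * (t - t0)).
      assert (Hct : Rabs (c - t0) <= Rabs (t - t0)).
      { unfold c. replace (t0 + lam * (t - t0) - t0) with (lam * (t - t0)) by ring.
        rewrite Rabs_mult, (Rabs_pos_eq lam) by lra. pose proof (Rabs_pos (t - t0)). nra. }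
      assert (Hcin : in_tint t0 T c).
      { unfold in_tint in *. unfold Rabs in Hct; repeat destruct Rcase_abs in Hct; lra. }
      apply (Hstep c t); auto.
      + unfold c. replace (t - (t0 + lam * (t - t0))) with ((1 - lam) * (t - t0)) by ring.
        rewrite Rabs_mult, (Rabs_pos_eq (1 - lam)) by lra.
        apply Rmult_le_reg_l with (INR (S k)); auto.
        rewrite <- Rmult_assoc, (Rmult_comm (INR (S k))), l2. nra.
      + apply IHk; auto. unfold c. replace (t0 + lam * (t - t0) - t0) with (lam * (t - t0)) by ring.
        rewrite Rabs_mult, (Rabs_pos_eq lam) by lra.
        apply Rmult_le_reg_l with (INR (S k)); auto.
        rewrite <- Rmult_assoc, (Rmult_comm (INR (S k))), l1.
        assert (INR k * Rabs (t - t0) <= INR k * (INR (S k) * tau)) by (apply Rmult_le_compat_l; auto).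
        nra. }
  intros t Ht. destruct (INR_archimed tau T Htau) as [k Hk'].
  apply (Hk k t Ht). unfold in_tint in Ht. unfold Rabs; destruct Rcase_abs; lra.
Qed.

Lemma ratio_le x y K : 0 < y -> Rabs (x / y) <= K -> x <= K * y.
Proof.
  intros Hy H. assert (x / y <= K) by (eapply Rle_trans; [apply Rle_abs|exact H]).
  replace x with ((x / y) * y) by (field; lra). nra.
Qed.

Lemma wnorm_fin_eq w q f g :
  wnorm_finite w (Finite q) f g <-> finZ (fun n => w n * (rpow (Cmod (f n)) q + rpow (Cmod (g n)) q)).
Proof. reflexivity. Qed.

Theorem lemma2p3
  (w : Z -> R) (p : Rbar) (t0 T : R)
  (a b a' b' : Z -> R -> C)
  (hw1 : forall n : Z, 1 <= w n)
  (hwsup : exists K : R, forall n : Z,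
      Rabs (w (n + 1)%Z / w n) + Rabs (w n / w (n + 1)%Z) <= K)
  (hp : Rbar_le (Finite 1) p)
  (hT : 0 < T)
  (hba : bounded_on t0 T a) (hbb : bounded_on t0 T b)
  (hba' : bounded_on t0 T a') (hbb' : bounded_on t0 T b')
  (hsol : AL_solution t0 T a b) (hsol' : AL_solution t0 T a' b')
  (h0 : wnorm_finite w p (fun n => (a n t0 - a' n t0)%C) (fun n => (b n t0 - b' n t0)%C)) :
  forall t : R, in_tint t0 T t ->
    wnorm_finite w p (fun n => (a n t - a' n t)%C) (fun n => (b n t - b' n t)%C).
Proof.
  assert (Ht0 : in_tint t0 T t0) by (unfold in_tint; lra).
  destruct hba as [M1 H1]. destruct hbb as [M2 H2]. destruct hba' as [M3 H3]. destruct hbb' as [M4 H4].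
  set (M := Rmax (Rmax M1 M2) (Rmax M3 M4)).
  assert (HM0 : 0 <= M).
  { apply Rle_trans with M1. apply Rle_trans with (Cmod (a 0%Z t0)). apply Cmod_ge_0. auto.
    unfold M. eapply Rle_trans; [apply Rmax_l|apply Rmax_l]. }
  assert (Hbd : forall n t, in_tint t0 T t -> Cmod (a n t) <= M /\ Cmod (b n t) <= M /\ Cmod (a' n t) <= M /\ Cmod (b' n t) <= M).
  { intros n t Ht. unfold M. repeat split.
    - eapply Rle_trans; [apply H1; auto|]. eapply Rle_trans; [apply Rmax_l|apply Rmax_l].
    - eapply Rle_trans; [apply H2; auto|]. eapply Rle_trans; [apply Rmax_r|apply Rmax_l].
    - eapply Rle_trans; [apply H3; auto|]. eapply Rle_trans; [apply Rmax_l|apply Rmax_r].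
    - eapply Rle_trans; [apply H4; auto|]. eapply Rle_trans; [apply Rmax_r|apply Rmax_r]. }
  destruct hwsup as [K0 HK0].
  set (K := Rmax K0 2).
  assert (HK2 : 2 <= K) by apply Rmax_r.
  assert (Hu : forall n, w (n+1)%Z <= K * w n).
  { intros n. apply Rle_trans with (K0 * w n).
    apply ratio_le. pose proof (hw1 n); lra.
    pose proof (HK0 n). pose proof (Rabs_pos (w n / w (n + 1)%Z)). lra.
    apply Rmult_le_compat_r. pose proof (hw1 n); lra. apply Rmax_l. }
  assert (Hd : forall n, w (n-1)%Z <= K * w n).
  { intros n. apply Rle_trans with (K0 * w n).
    pose proof (HK0 (n-1)%Z). replace (n - 1 + 1)%Z with n in H by lia.
    apply ratio_le. pose proof (hw1 n); lra.
    pose proof (Rabs_pos (w (n-1)%Z / w n)). pose proof (Rabs_pos (w n / w (n-1)%Z)). lra.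
    apply Rmult_le_compat_r. pose proof (hw1 n); lra. apply Rmax_l. }
  set (D := 3 + 3 * M * M).
  assert (HD : 0 < D) by (unfold D; nra).
  destruct p as [q| |]; simpl in hp; [| |contradiction].
  -
    set (c2 := Rpower 2 q).
    assert (c21 : 1 <= c2) by (apply Rpower2_ge1; lra).
    set (eps := Rmin 1 (/ (2 * (c2 * c2) * (1 + 2 * K)))).
    assert (Heps0 : 0 < eps).
    { unfold eps, Rmin; destruct Rle_dec; [lra|]. apply Rinv_0_lt_compat. nra. }
    assert (Heps1 : eps <= 1) by apply Rmin_l.
    assert (Heps2 : eps <= / (2 * (c2 * c2) * (1 + 2 * K))) by apply Rmin_r.
    set (tau := eps / (4 * D)).
    assert (Htau : 0 < tau) by (unfold tau; apply Rdiv_lt_0_compat; lra).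
    assert (Htd : 4 * tau * D = eps) by (unfold tau; field; lra).
    apply (cover (fun t => wnorm_finite w (Finite q) (fun n => (a n t - a' n t)%C) (fun n => (b n t - b' n t)%C)) t0 T tau Htau h0).
    intros c s Hc Hs Hcs Fc.
    destruct (K1 t0 T a b a' b' M tau c HM0 Hbd hsol hsol' Htau Hc) as [Y (HY0 & HYup & HYi)].
    fold D in HYi. rewrite Htd in HYi.
    apply wnorm_fin_eq in Fc. apply wnorm_fin_eq.
    set (tc := fun n => w n * (rpow (Cmod (a n c - a' n c)%C) q + rpow (Cmod (b n c - b' n c)%C) q)).
    assert (tc0 : forall n, 0 <= tc n).
    { intros n; unfold tc. pose proof (hw1 n). pose proof (rpow_nonneg (Cmod (a n c - a' n c)%C) q).
      pose proof (rpow_nonneg (Cmod (b n c - b' n c)%C) q). nra. }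
    destruct (finZ_Wsum tc tc0 Fc) as [B0 HB0].
    assert (HXc : forall n, 0 <= Xd a b a' b' n c).
    { intros n; unfold Xd. pose proof (Cmod_ge_0 (a n c - a' n c)%C). pose proof (Cmod_ge_0 (b n c - b' n c)%C). lra. }
    assert (Hq0 : 0 <= q) by lra.
    assert (Hpe : Rpower eps q <= eps) by (apply Rpower_small; lra).
    assert (HW := wsum_core w (fun n => rpow (Y n) q) (fun n => c2 * c2 * rpow (Xd a b a' b' n c) q)
               K (rpow (4 * M) q) (c2 * c2 * Rpower eps q) (c2 * c2 * c2 * B0)
               hw1 HK2 Hu Hd).
    assert (Hfin : forall L, Wsum (fun n => w n * rpow (Y n) q) L <= 2 * (c2 * c2 * c2 * B0) + 2).
    { apply HW.
      - intros n. split. apply rpow_nonneg. apply rpow_mono; auto.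
      - intros n. pose proof (rpow_nonneg (Xd a b a' b' n c) q). nra.
      - pose proof (Rpower_pos eps q). nra.
      - assert (c2 * c2 * Rpower eps q * (1 + 2 * K) <= c2 * c2 * eps * (1 + 2 * K)).
        { apply Rmult_le_compat_r. lra. apply Rmult_le_compat_l. nra. auto. }
        assert (c2 * c2 * eps * (1 + 2 * K) <= / 2).
        { replace (/2) with ((2 * (c2 * c2) * (1 + 2 * K)) * / (2 * (c2 * c2) * (1 + 2 * K)) * /2) by (field; nra).
          assert (0 < 2 * (c2 * c2) * (1 + 2 * K)) by nra. nra. }
        lra.
      - intros n.
        destruct (HY0 (n-1)%Z), (HY0 n), (HY0 (n+1)%Z).
        pose proof (HXc n).
        apply Rle_trans with (rpow ((Xd a b a' b' n c + eps * Y (n-1)%Z) + (eps * Y n + eps * Y (n+1)%Z)) q).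
        { apply rpow_mono; auto. split. lra. pose proof (HYi n). lra. }
        eapply Rle_trans. apply rpow_add; auto; nra.
        pose proof (rpow_add (Xd a b a' b' n c) (eps * Y (n-1)%Z) q Hq0 ltac:(auto) ltac:(nra)) as P6.
        pose proof (rpow_add (eps * Y n) (eps * Y (n+1)%Z) q Hq0 ltac:(nra) ltac:(nra)) as P7.
        rewrite !rpow_hom in P6 by lra. rewrite (rpow_hom eps (Y n)), (rpow_hom eps (Y (n+1)%Z)) in P7 by lra.
        fold c2 in P6, P7.
        assert (c2 * (rpow (Xd a b a' b' n c + eps * Y (n - 1)%Z) q + rpow (eps * Y n + eps * Y (n + 1)%Z) q)
                <= c2 * (c2 * (rpow (Xd a b a' b' n c) q + Rpower eps q * rpow (Y (n - 1)%Z) q) +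
                         c2 * (Rpower eps q * rpow (Y n) q + Rpower eps q * rpow (Y (n + 1)%Z) q))).
        { apply Rmult_le_compat_l. lra. lra. }
        fold c2. nra.
      - intros L. apply Rle_trans with (Wsum (fun n => c2 * c2 * c2 * tc n) L).
        + apply Wsum_le. intros n. unfold tc, Xd.
          pose proof (rpow_add (Cmod (a n c - a' n c)%C) (Cmod (b n c - b' n c)%C) q Hq0 (Cmod_ge_0 _) (Cmod_ge_0 _)).
          fold c2 in H. pose proof (hw1 n).
          pose proof (rpow_nonneg (Cmod (a n c - a' n c)%C + Cmod (b n c - b' n c)%C) q).
          assert (w n * rpow (Cmod (a n c - a' n c)%C + Cmod (b n c - b' n c)%C) q <=
                  w n * (c2 * (rpow (Cmod (a n c - a' n c)%C) q + rpow (Cmod (b n c - b' n c)%C) q))) by nra.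
          assert (0 <= c2 * c2) by nra. nra.
        + rewrite Wsum_scal. apply Rmult_le_compat_l. nra. apply HB0. }
    apply (Wsum_finZ _ (2 * (2 * (c2 * c2 * c2 * B0) + 2))).
    + intros n. pose proof (hw1 n). pose proof (rpow_nonneg (Cmod (a n s - a' n s)%C) q).
      pose proof (rpow_nonneg (Cmod (b n s - b' n s)%C) q). nra.
    + intros L. apply Rle_trans with (Wsum (fun n => 2 * (w n * rpow (Y n) q)) L).
      * apply Wsum_le. intros n.
        pose proof (HYup n s Hs Hcs). unfold Xd in H.
        assert (rpow (Cmod (a n s - a' n s)%C) q <= rpow (Y n) q) by
          (apply rpow_mono; auto; split; [apply Cmod_ge_0| pose proof (Cmod_ge_0 (b n s - b' n s)%C); lra]).
        assert (rpow (Cmod (b n s - b' n s)%C) q <= rpow (Y n) q) by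
          (apply rpow_mono; auto; split; [apply Cmod_ge_0| pose proof (Cmod_ge_0 (a n s - a' n s)%C); lra]).
        pose proof (hw1 n). nra.
      * rewrite Wsum_scal. specialize (Hfin L). lra.
  -
    set (eps := / (2 * (1 + 2 * K))).
    assert (Heps0 : 0 < eps) by (unfold eps; apply Rinv_0_lt_compat; lra).
    set (tau := eps / (4 * D)).
    assert (Htau : 0 < tau) by (unfold tau; apply Rdiv_lt_0_compat; lra).
    assert (Htd : 4 * tau * D = eps) by (unfold tau; field; lra).
    apply (cover (fun t => wnorm_finite w p_infty (fun n => (a n t - a' n t)%C) (fun n => (b n t - b' n t)%C)) t0 T tau Htau h0).
    intros c s Hc Hs Hcs [B0 HB0].
    destruct (K1 t0 T a b a' b' M tau c HM0 Hbd hsol hsol' Htau Hc) as [Y (HY0 & HYup & HYi)].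
    fold D in HYi. rewrite Htd in HYi.
    assert (HXc : forall n, 0 <= Xd a b a' b' n c).
    { intros n; unfold Xd. pose proof (Cmod_ge_0 (a n c - a' n c)%C). pose proof (Cmod_ge_0 (b n c - b' n c)%C). lra. }
    pose proof (wsup_core w Y (fun n => Xd a b a' b' n c) K (4 * M) eps B0 hw1 HK2 Hu Hd HY0 HXc
                  (Rlt_le _ _ Heps0) ltac:(unfold eps; rewrite Rinv_mult; field_simplify; lra) HYi HB0) as W.
    exists (2 * B0). intros n. specialize (W n). pose proof (HYup n s Hs Hcs). unfold Xd in H.
    pose proof (hw1 n). simpl. nra.
Qed.
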